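(* Let $X_n$ and $Y_n$ be random variables taking values in countable sets $\mathcal X_n$ and $\mathcal Y_n$, with pmfs $P_{X_n}$, $P_{Y_n}$. Let $\epsilon\in(0,1)$ and $\gamma>0$ satisfy $e^{-\gamma}\le\epsilon$. Define $$\mathcal E^n(\gamma)=\{\delta\in[0,1): c_n^x(\delta)-c_n^y(\delta)<\gamma\}.$$ Then there exists a (deterministic) map $\phi_n:\mathcal X_n\to\mathcal Y_n$ such that $$d\big(P_{Y_n},P_{\phi_n(X_n)}\big)\le 9\epsilon+10\,\mu(\mathcal E^n(\gamma)).$$
   Context: Logarithms are natural. For a random variable $Z$ on a countable set $\mathcal Z$ with pmf $P_Z$, list the elements of positive probability as $z_1,z_2,\dots$ (a finite or countably infinite list) with $P_Z(z_1)\ge P_Z(z_2)\ge\cdots$ (ties broken arbitrarily). Set $\delta_0=0$ and $\delta_k=\sum_{i\le k}P_Z(z_i)$. For $\delta\in[0,1)$ define $c^z(\delta)=\log\frac{1}{P_Z(z_k)}$, where $k$ is the unique index with $\delta\in[\delta_{k-1},\delta_k)$. This is a nonnegative, nondecreasing, right-continuous step function on $[0,1)$ that does not depend on the tie-breaking. Here $c_n^x$ and $c_n^y$ denote this function built from $P_{X_n}$ and from $P_{Y_n}$ respectively. The variational distance between pmfs $P,Q$ on a countable set is $d(P,Q)=\sum_a|P(a)-Q(a)|$ (no factor $1/2$). $\mu$ denotes Lebesgue measure on $\mathbb R$. *)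

(* Defs.v *)
From Stdlib Require Import Reals Lra List Classical ClassicalEpsilon.
Open Scope R_scope.

Definition sum_list {T : Type} (f : T -> R) (l : list T) : R :=
  fold_right (fun x acc => f x + acc) 0 l.

Definition finite_sums {T : Type} (f : T -> R) (s : R) : Prop :=
  exists l : list T, NoDup l /\ s = sum_list f l.

Definition lub_or_0 (S : R -> Prop) : R :=
  match excluded_middle_informative (bound S /\ exists x, S x) with
  | left h => proj1_sig (completeness S (proj1 h) (proj2 h))
  | right _ => 0
  end.

(* Sum over a (countable) type of a nonnegative function: the supremum of its
   finite partial sums (0 if divergent; only used for summable nonneg. f). *)
Definition tsum {T : Type} (f : T -> R) : R := lub_or_0 (finite_sums f).

Definition is_pmf {T : Type} (P : T -> R) : Prop :=
  (forall x, 0 <= P x) /\ is_lub (finite_sums P) 1.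

Definition countable (T : Type) : Prop :=
  exists f : T -> nat, forall a b, f a = f b -> a = b.

Definition pushforward {X Y : Type} (P : X -> R) (phi : X -> Y) : Y -> R :=
  fun y => tsum (fun x => if excluded_middle_informative (phi x = y) then P x else 0).

(* variational distance d(P,Q) = sum |P a - Q a| (no factor 1/2) *)
Definition var_dist {T : Type} (P Q : T -> R) : R :=
  tsum (fun a => Rabs (P a - Q a)).

(* z_0, z_1, ... (indices k with I k, I downward closed) is a listing of the
   elements of positive probability, without repetition, nonincreasing in P. *)
Definition dec_enum {T : Type} (P : T -> R) (I : nat -> Prop) (z : nat -> T) : Prop :=
  (forall k, I (S k) -> I k) /\
  (forall k l, I k -> I l -> z k = z l -> k = l) /\
  (forall k, I k -> 0 < P (z k)) /\
  (forall x, 0 < P x -> exists k, I k /\ z k = x) /\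
  (forall k, I (S k) -> P (z (S k)) <= P (z k)).

(* delta k = sum_{i<k} P(z i) (0-based; the paper's delta_k with shifted index) *)
Fixpoint delta {T : Type} (P : T -> R) (z : nat -> T) (k : nat) : R :=
  match k with
  | O => 0
  | S k' => delta P z k' + P (z k')
  end.

(* c^z(d) = v : v = log(1/P(z_k)) for the k with d in [delta_k, delta_{k+1}). *)
Definition c_fun {T : Type} (P : T -> R) (I : nat -> Prop) (z : nat -> T)
  (d v : R) : Prop :=
  exists k, I k /\ delta P z k <= d < delta P z (S k) /\ v = ln (/ P (z k)).

Definition E_set {X Y : Type} (PX : X -> R) (IX : nat -> Prop) (zX : nat -> X)
  (PY : Y -> R) (IY : nat -> Prop) (zY : nat -> Y) (gamma : R) (d : R) : Prop :=
  0 <= d < 1 /\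
  exists vx vy, c_fun PX IX zX d vx /\ c_fun PY IY zY d vy /\ vx - vy < gamma.

Definition cover_lengths (E : R -> Prop) (t : R) : Prop :=
  exists a b : nat -> R,
    (forall k, a k <= b k) /\
    (forall x, E x -> exists k, a k <= x < b k) /\
    Un_cv (sum_f_R0 (fun k => b k - a k)) t.

(* Lebesgue (outer) measure: infimum of total lengths of interval covers. *)
Definition lebesgue (E : R -> Prop) : R :=
  - lub_or_0 (fun t => cover_lengths E (- t)).

(* Main.v *)
Require Import Defs.
From Stdlib Require Import Reals Lra Lia List Classical ClassicalEpsilon Arith.
Import ListNotations.
Open Scope R_scope.

Definition cdec {T : Type} : forall x y : T, {x = y} + {x <> y} :=
  fun x y => excluded_middle_informative (x = y).

Lemma sum_list_nil {T} (f : T -> R) : sum_list f [] = 0.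
Proof. reflexivity. Qed.
Lemma sum_list_cons {T} (f : T -> R) x l : sum_list f (x :: l) = f x + sum_list f l.
Proof. reflexivity. Qed.

Lemma sum_list_app {T} (f : T -> R) l1 l2 :
  sum_list f (l1 ++ l2) = sum_list f l1 + sum_list f l2.
Proof. induction l1; simpl; [ring| rewrite IHl1; ring]. Qed.

Lemma sum_list_le {T} (f g : T -> R) l :
  (forall x, In x l -> f x <= g x) -> sum_list f l <= sum_list g l.
Proof.
  induction l as [|a l IH]; intros H; simpl; [lra|].
  assert (f a <= g a) by (apply H; left; auto).
  assert (sum_list f l <= sum_list g l) by (apply IH; intros; apply H; right; auto).
  lra.
Qed.

Lemma sum_list_ext {T} (f g : T -> R) l :
  (forall x, In x l -> f x = g x) -> sum_list f l = sum_list g l.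
Proof.
  intros H; apply Rle_antisym; apply sum_list_le; intros x Hx; rewrite (H x Hx); lra.
Qed.

Lemma sum_list_nonneg {T} (f : T -> R) l :
  (forall x, 0 <= f x) -> 0 <= sum_list f l.
Proof. intros H; induction l; simpl; [lra|]. specialize (H a); lra. Qed.

Lemma sum_list_lin {T} (f g h : T -> R) (a : R) l :
  sum_list (fun x => a * f x - g x + h x) l = a * sum_list f l - sum_list g l + sum_list h l.
Proof. induction l; simpl; [ring|rewrite IHl; ring]. Qed.

Lemma sum_list_remove {T} (f : T -> R) l x :
  (forall y, 0 <= f y) -> NoDup l -> sum_list f l <= f x + sum_list f (remove cdec x l).
Proof.
  intros Hf; induction l as [|a l IH]; intros Hnd; simpl.
  - specialize (Hf x); lra.
  - inversion Hnd; subst.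
    destruct (cdec x a) as [e|ne].
    + subst. rewrite notin_remove; auto; lra.
    + simpl. specialize (IH H2). lra.
Qed.

Lemma sum_list_remove_in {T} (f : T -> R) l x :
  (forall y, 0 <= f y) -> In x l -> f x + sum_list f (remove cdec x l) <= sum_list f l.
Proof.
  intros Hf; induction l as [|a l IH]; intros Hin; simpl.
  - destruct Hin.
  - destruct (cdec x a) as [e|ne].
    + subst. destruct (in_dec cdec a l) as [i|ni].
      * specialize (IH i). specialize (Hf a). lra.
      * rewrite notin_remove; auto; lra.
    + simpl. destruct Hin as [h|h]; [congruence|]. specialize (IH h). lra.
Qed.

Lemma NoDup_remove_cd {T} (l : list T) x : NoDup l -> NoDup (remove cdec x l).
Proof.
  induction l as [|a l IH]; intros H; simpl; [constructor|].
  inversion H; subst. destruct (cdec x a); auto.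
  constructor; auto. intros Hi. apply in_remove in Hi. tauto.
Qed.

Lemma sum_list_incl {T} (f : T -> R) l1 l2 :
  (forall y, 0 <= f y) -> NoDup l1 -> NoDup l2 -> (forall x, In x l1 -> In x l2) ->
  sum_list f l1 <= sum_list f l2.
Proof.
  intros Hf; revert l2; induction l1 as [|a l1 IH]; intros l2 H1 H2 Hi; simpl.
  - apply sum_list_nonneg; auto.
  - inversion H1; subst.
    assert (Ha : In a l2) by (apply Hi; left; auto).
    pose proof (sum_list_remove_in f l2 a Hf Ha).
    assert (sum_list f l1 <= sum_list f (remove cdec a l2)).
    { apply IH; auto. apply NoDup_remove_cd; auto.
      intros x Hx. apply in_in_remove. intros e; subst; tauto. apply Hi; right; auto. }
    lra.
Qed.

Lemma sum_list_in {T} (f : T -> R) l x :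
  (forall y, 0 <= f y) -> In x l -> f x <= sum_list f l.
Proof.
  intros Hf Hi. pose proof (sum_list_remove_in f l x Hf Hi).
  pose proof (sum_list_nonneg f (remove cdec x l) Hf). lra.
Qed.

Fixpoint sumn (w : nat -> R) (n : nat) : R :=
  match n with O => 0 | S n' => sumn w n' + w n' end.

Lemma sumn_nonneg w n : (forall k, 0 <= w k) -> 0 <= sumn w n.
Proof. intros H; induction n; simpl; [lra|]. specialize (H n); lra. Qed.

Lemma sumn_le w v n : (forall k, (k < n)%nat -> w k <= v k) -> sumn w n <= sumn v n.
Proof.
  induction n; intros H; simpl; [lra|].
  assert (sumn w n <= sumn v n) by (apply IHn; intros; apply H; lia).
  assert (w n <= v n) by (apply H; lia). lra.
Qed.

Lemma sumn_lin w v (a : R) n : sumn (fun k => a * w k + v k) n = a * sumn w n + sumn v n.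
Proof. induction n; simpl; [ring|rewrite IHn; ring]. Qed.

Lemma sum_list_nat_bound (w : nat -> R) L N :
  (forall k, 0 <= w k) -> NoDup L -> (forall k, In k L -> (k < N)%nat) ->
  sum_list w L <= sumn w N.
Proof.
  intros Hw; revert L; induction N; intros L Hnd HL; simpl.
  - destruct L as [|k L]; simpl; [lra|]. specialize (HL k (or_introl eq_refl)); lia.
  - pose proof (sum_list_remove w L N Hw Hnd).
    assert (sum_list w (remove cdec N L) <= sumn w N).
    { apply IHN. apply NoDup_remove_cd; auto.
      intros k Hk. apply in_remove in Hk. destruct Hk as [Hk ne].
      specialize (HL k Hk). lia. }
    lra.
Qed.

Lemma sum_list_seq (g : nat -> R) n a :
  sum_list g (seq a n) + sumn g a = sumn g (a + n).
Proof.
  revert a; induction n; intros a; simpl.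
  - rewrite Nat.add_0_r; ring.
  - specialize (IHn (S a)). simpl in IHn. rewrite Nat.add_succ_r. simpl. lra.
Qed.

Lemma sumn_sum_f (g : nat -> R) n : sumn g (S n) = sum_f_R0 g n.
Proof. induction n; simpl; [ring|]. simpl in IHn. rewrite <- IHn. ring. Qed.

Lemma reindex {T} (h : T -> R) (z : nat -> T) (J : nat -> Prop) (w : nat -> R) l :
  NoDup l ->
  (forall x, In x l -> h x <= 0 \/ exists k, J k /\ z k = x /\ h x <= w k) ->
  exists L, NoDup L /\ (forall k, In k L -> J k /\ In (z k) l) /\
    sum_list h l <= sum_list w L.
Proof.
  induction l as [|x l IH]; intros Hnd H.
  - exists []. split; [constructor|]. split; [intros k []|]. simpl; lra.
  - inversion Hnd; subst.
    destruct IH as [L [HL1 [HL2 HL3]]]; auto.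
    { intros y Hy; apply H; right; auto. }
    destruct (H x (or_introl eq_refl)) as [h0|[k [Jk [zk hk]]]].
    + exists L. split; auto. split.
      * intros k' Hk'. destruct (HL2 k' Hk'); split; auto. right; auto.
      * simpl; lra.
    + exists (k :: L). split; [|split].
      * constructor; auto. intros Hk. apply HL2 in Hk. rewrite zk in Hk. tauto.
      * intros k' [e|i]; [subst; split; auto; left; auto|].
        destruct (HL2 k' i); split; auto. right; auto.
      * simpl; lra.
Qed.

Lemma tsum_nonneg {T} (f : T -> R) : 0 <= tsum f.
Proof.
  unfold tsum, lub_or_0. destruct excluded_middle_informative as [h|h]; [|lra].
  destruct completeness as [m [Hm1 Hm2]]. simpl. apply Hm1.
  exists []. split; [constructor|reflexivity].
Qed.

Lemma tsum_ge {T} (f : T -> R) B l :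
  (forall l, NoDup l -> sum_list f l <= B) -> NoDup l -> sum_list f l <= tsum f.
Proof.
  intros HB Hl. unfold tsum, lub_or_0. destruct excluded_middle_informative as [h|h].
  - destruct completeness as [m [Hm1 Hm2]]. simpl. apply Hm1. exists l; auto.
  - exfalso. apply h. split.
    + exists B. intros s [l' [H1 H2]]. subst. auto.
    + exists 0. exists []. split; [constructor|reflexivity].
Qed.

Lemma tsum_le {T} (f : T -> R) B :
  (forall l, NoDup l -> sum_list f l <= B) -> 0 <= B -> tsum f <= B.
Proof.
  intros HB H0. unfold tsum, lub_or_0. destruct excluded_middle_informative as [h|h]; [|lra].
  destruct completeness as [m [Hm1 Hm2]]. simpl. apply Hm2.
  intros s [l' [H1 H2]]. subst. auto.
Qed.

Lemma tsum_approx {T} (f : T -> R) B :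
  (forall l, NoDup l -> sum_list f l <= B) -> forall eta, 0 < eta ->
  exists l, NoDup l /\ tsum f - eta < sum_list f l.
Proof.
  intros HB eta Heta. apply NNPP. intros Hn.
  assert (tsum f <= tsum f - eta).
  { unfold tsum at 1, lub_or_0. destruct excluded_middle_informative as [h|h].
    - destruct completeness as [m [Hm1 Hm2]]. simpl. apply Hm2.
      intros s [l' [H1 H2]]. subst. apply Rnot_lt_le. intros Hc. apply Hn. exists l'; auto.
    - exfalso. apply h. split.
      + exists B. intros s [l' [H1 H2]]. subst. auto.
      + exists 0. exists []. split; [constructor|reflexivity]. }
  lra.
Qed.

Lemma pmf_bound {T} (P : T -> R) : is_pmf P -> forall l, NoDup l -> sum_list P l <= 1.
Proof. intros [_ [H1 _]] l Hl. apply H1. exists l; auto. Qed.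

Lemma pmf_approx {T} (P : T -> R) : is_pmf P -> forall r, r < 1 ->
  exists l, NoDup l /\ r < sum_list P l.
Proof.
  intros [_ [H1 H2]] r Hr. apply NNPP; intros Hn.
  assert (1 <= r); [|lra]. apply H2. intros s [l [Hl e]]; subst.
  apply Rnot_lt_le. intros Hc. apply Hn. exists l; auto.
Qed.

Lemma fin_cover (al be : nat -> R) (Hab : forall k, al k <= be k) :
  forall n L c T, (length L <= n)%nat ->
  (forall y, c <= y <= T -> exists k, In k L /\ al k < y < be k) ->
  T - c <= sum_list (fun k => be k - al k) L.
Proof.
  assert (Hnn : forall k, 0 <= be k - al k) by (intros k; specialize (Hab k); lra).
  induction n; intros L c T Hlen Hcov.
  - destruct (Rlt_dec T c) as [h|h].
    + pose proof (sum_list_nonneg _ L Hnn); lra.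
    + destruct (Hcov c) as [k [Hk _]]; [lra|]. destruct L; simpl in Hlen; [destruct Hk|lia].
  - destruct (Rlt_dec T c) as [h|h].
    + pose proof (sum_list_nonneg _ L Hnn); lra.
    + destruct (Hcov c) as [K [HK [H1 H2]]]; [lra|].
      pose proof (sum_list_in _ L K Hnn HK) as Hin.
      destruct (Rlt_dec T (be K)) as [h2|h2]; [simpl in Hin; lra|].
      assert (T - be K <= sum_list (fun k => be k - al k) (remove cdec K L)).
      { apply IHn.
        - pose proof (remove_length_lt cdec L K HK); lia.
        - intros y Hy. destruct (Hcov y) as [k [Hk Hk2]]; [lra|].
          exists k; split; auto. apply in_in_remove; auto. intros e; subst; lra. }
      pose proof (sum_list_remove_in _ L K Hnn HK). simpl in *. lra.
Qed.

Lemma HB (al be : nat -> R) c T : c <= T ->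
  (forall y, c <= y <= T -> exists k, al k < y < be k) ->
  exists n, forall y, c <= y <= T -> exists k, (k <= n)%nat /\ al k < y < be k.
Proof.
  intros HcT Hcov.
  set (A := fun x => c <= x <= T /\ exists n, forall y, c <= y <= x ->
                 exists k, (k <= n)%nat /\ al k < y < be k).
  assert (HAc : A c).
  { split; [lra|]. destruct (Hcov c) as [K HK]; [lra|]. exists K. intros y Hy.
    exists K; split; auto. replace y with c by lra; auto. }
  assert (Hb : bound A) by (exists T; intros x [Hx _]; lra).
  destruct (completeness A Hb (ex_intro _ c HAc)) as [s [Hs1 Hs2]].
  assert (Hcs : c <= s) by (apply Hs1; auto).
  assert (HsT : s <= T) by (apply Hs2; intros x [Hx _]; lra).
  destruct (Hcov s) as [K [HK1 HK2]]; [lra|].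
  assert (Hx : exists x, A x /\ al K < x).
  { apply NNPP; intros Hn. assert (s <= al K); [|lra]. apply Hs2.
    intros x Hx. apply Rnot_lt_le. intros Hc. apply Hn. exists x; auto. }
  destruct Hx as [x [[Hx1 [n Hn]] Hx2]].
  set (z := Rmin T ((s + be K) / 2)).
  assert (HAz : A z).
  { unfold z; split.
    - split; [apply Rmin_glb; lra | apply Rmin_l].
    - exists (Nat.max n K). intros y Hy.
      destruct (Rle_dec y x) as [h|h].
      + destruct (Hn y) as [k [Hk1 Hk2]]; [lra|]. exists k; split; auto; lia.
      + exists K; split; [lia|]. split; [lra|].
        pose proof (Rmin_r T ((s + be K) / 2)). lra. }
  assert (Hzs : z <= s) by (apply Hs1; auto).
  assert (HzT : z = T).
  { unfold z in *. unfold Rmin in *. destruct Rle_dec; lra. }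
  rewrite HzT in HAz. destruct HAz as [_ [n' Hn']]. exists n'; auto.
Qed.

Lemma geom_sum (e : R) n : sum_f_R0 (fun k => e / 2 ^ (S k)) n = e - e / 2 ^ (S n).
Proof.
  induction n.
  - simpl. field.
  - change (sum_f_R0 (fun k => e / 2 ^ S k) (S n)) with
      (sum_f_R0 (fun k => e / 2 ^ S k) n + e / 2 ^ S (S n)).
    rewrite IHn. simpl. field. apply pow_nonzero. lra.
Qed.

Lemma sum_f_R0_nonneg (u : nat -> R) n : (forall k, 0 <= u k) -> 0 <= sum_f_R0 u n.
Proof. intros H; induction n; simpl; auto. specialize (H (S n)); lra. Qed.

Lemma sum_f_R0_mono (u : nat -> R) n m : (forall k, 0 <= u k) -> (n <= m)%nat ->
  sum_f_R0 u n <= sum_f_R0 u m.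
Proof.
  intros H Hnm; induction Hnm; [lra|]. simpl. specialize (H (S m)); lra.
Qed.

Lemma sum_f_R0_plus (u v : nat -> R) n :
  sum_f_R0 (fun k => u k + v k) n = sum_f_R0 u n + sum_f_R0 v n.
Proof. induction n; simpl; [ring|rewrite IHn; ring]. Qed.

Lemma sum_f_R0_ext (u v : nat -> R) n : (forall k, u k = v k) ->
  sum_f_R0 u n = sum_f_R0 v n.
Proof. intros H; induction n; simpl; rewrite ?IHn, ?H; auto. Qed.

Lemma SI (a b : nat -> R) c d : (forall k, a k <= b k) ->
  (forall y, c <= y < d -> exists k, a k <= y < b k) ->
  forall eta, 0 < eta -> exists n, d - c <= sum_f_R0 (fun k => b k - a k) n + eta.
Proof.
  intros Hab Hcov eta Heta.
  assert (Hnn : forall k, 0 <= b k - a k) by (intros k; specialize (Hab k); lra).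
  destruct (Rle_dec d c) as [h|h].
  { exists 0%nat. pose proof (sum_f_R0_nonneg _ 0 Hnn). lra. }
  set (th := Rmin (eta / 2) ((d - c) / 2)).
  assert (Hth1 : th <= eta / 2) by apply Rmin_l.
  assert (Hth2 : th <= (d - c) / 2) by apply Rmin_r.
  assert (Hth3 : 0 < th) by (apply Rmin_glb_lt; lra).
  set (al := fun k => a k - (eta / 2) / 2 ^ (S k)).
  assert (Hpos : forall k, 0 < (eta / 2) / 2 ^ (S k)).
  { intros k. apply Rdiv_lt_0_compat; [lra|]. apply pow_lt; lra. }
  assert (Hcv : forall y, c <= y <= d - th -> exists k, al k < y < b k).
  { intros y Hy. destruct (Hcov y) as [k Hk]; [lra|]. exists k. unfold al.
    specialize (Hpos k). lra. }
  assert (HcT : c <= d - th) by lra.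
  destruct (HB al b c (d - th) HcT Hcv) as [n Hn].
  exists n.
  assert (Hal : forall k, al k <= b k) by (intros k; unfold al; specialize (Hpos k); specialize (Hab k); lra).
  pose proof (fin_cover al b Hal (length (seq 0 (S n))) (seq 0 (S n)) c (d - th) (le_n _)) as HF.
  assert (d - th - c <= sum_list (fun k => b k - al k) (seq 0 (S n))).
  { apply HF. intros y Hy. destruct (Hn y Hy) as [k [Hk1 Hk2]]. exists k; split; auto.
    apply in_seq. lia. }
  pose proof (sum_list_seq (fun k => b k - al k) (S n) 0) as Hs. rewrite Nat.add_0_l in Hs. change (sumn (fun k => b k - al k) 0) with 0 in Hs.
  rewrite sumn_sum_f in Hs.
  assert (sum_f_R0 (fun k => b k - al k) n =
          sum_f_R0 (fun k => b k - a k) n + sum_f_R0 (fun k => (eta/2) / 2 ^ (S k)) n).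
  { rewrite <- sum_f_R0_plus. apply sum_f_R0_ext. intros k; unfold al; ring. }
  rewrite geom_sum in H0.
  assert (0 < (eta/2) / 2 ^ (S n)) by apply Hpos.
  lra.
Qed.

Lemma multi (c d : nat -> R) : forall N a b, (forall k, a k <= b k) ->
  (forall i, (i < N)%nat -> c i <= d i) ->
  (forall i i', (i < i')%nat -> (i' < N)%nat -> d i <= c i') ->
  (forall i y, (i < N)%nat -> c i <= y < d i -> exists k, a k <= y < b k) ->
  forall eta, 0 < eta ->
  exists n, sumn (fun i => d i - c i) N <= sum_f_R0 (fun k => b k - a k) n + eta.
Proof.
  induction N; intros a b Hab Hcd Hsort Hcov eta Heta.
  - exists 0%nat. simpl. assert (0 <= b 0%nat - a 0%nat) by (specialize (Hab 0%nat); lra). lra.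
  - set (m := c N).
    destruct (IHN (fun k => Rmin (a k) m) (fun k => Rmin (b k) m)) with (eta := eta / 2)
      as [n1 Hn1].
    + intros k. specialize (Hab k). unfold Rmin; repeat destruct Rle_dec; lra.
    + intros; apply Hcd; lia.
    + intros; apply Hsort; lia.
    + intros i y Hi Hy. destruct (Hcov i y) as [k Hk]; [lia|auto|].
      assert (d i <= m) by (apply Hsort; lia).
      exists k. unfold Rmin; repeat destruct Rle_dec; lra.
    + lra.
    + destruct (SI (fun k => Rmax (a k) m) (fun k => Rmax (b k) m) (c N) (d N)) with (eta := eta / 2)
        as [n2 Hn2].
      * intros k. specialize (Hab k). unfold Rmax; repeat destruct Rle_dec; lra.
      * intros y Hy. destruct (Hcov N y) as [k Hk]; [lia|auto|].
        exists k. unfold m, Rmax; repeat destruct Rle_dec; lra.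
      * lra.
      * exists (Nat.max n1 n2).
        assert (Hn1' : forall k, 0 <= Rmin (b k) m - Rmin (a k) m).
        { intros k. specialize (Hab k). unfold Rmin; repeat destruct Rle_dec; lra. }
        assert (Hn2' : forall k, 0 <= Rmax (b k) m - Rmax (a k) m).
        { intros k. specialize (Hab k). unfold Rmax; repeat destruct Rle_dec; lra. }
        pose proof (sum_f_R0_mono _ n1 (Nat.max n1 n2) Hn1' (Nat.le_max_l _ _)).
        pose proof (sum_f_R0_mono _ n2 (Nat.max n1 n2) Hn2' (Nat.le_max_r _ _)).
        assert (sum_f_R0 (fun k => b k - a k) (Nat.max n1 n2) =
          sum_f_R0 (fun k => Rmin (b k) m - Rmin (a k) m) (Nat.max n1 n2) +
          sum_f_R0 (fun k => Rmax (b k) m - Rmax (a k) m) (Nat.max n1 n2)).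
        { rewrite <- sum_f_R0_plus. apply sum_f_R0_ext. intros k.
          unfold Rmin, Rmax; repeat destruct Rle_dec; lra. }
        simpl. lra.
Qed.

Lemma partial_one n : sum_f_R0 (fun k => (if Nat.eq_dec k 0 then 1 else 0) - 0) n = 1.
Proof. induction n; simpl; [lra|]. rewrite IHn. lra. Qed.

Lemma leb_ge (E : R -> Prop) (S : R) : (forall x, E x -> 0 <= x < 1) ->
  (forall a b, (forall k, a k <= b k) -> (forall x, E x -> exists k, a k <= x < b k) ->
     forall eta, 0 < eta -> exists n, S <= sum_f_R0 (fun k => b k - a k) n + eta) ->
  S <= lebesgue E.
Proof.
  intros HE H. unfold lebesgue, lub_or_0.
  assert (Hlim : forall t, cover_lengths E (- t) -> S <= - t).
  { intros t [a [b [Hab [Hc Hl]]]].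
    assert (Hnn : forall k, 0 <= b k - a k) by (intros k; specialize (Hab k); lra).
    assert (Hg : Un_growing (sum_f_R0 (fun k => b k - a k))).
    { intros n. simpl. specialize (Hnn (Datatypes.S n)). lra. }
    apply Rnot_lt_le. intros Hlt.
    destruct (H a b Hab Hc ((S - - t) / 2)) as [n Hn]; [lra|].
    pose proof (growing_ineq _ _ Hg Hl n). lra. }
  destruct excluded_middle_informative as [h|h].
  - destruct completeness as [m [Hm1 Hm2]]. simpl.
    assert (m <= - S); [|lra]. apply Hm2. intros t Ht. specialize (Hlim t Ht). lra.
  - exfalso. apply h. split.
    + exists 0. intros t [a [b [Hab [Hc Hl]]]].
      assert (Hg : Un_growing (sum_f_R0 (fun k => b k - a k))).
      { intros n. simpl. specialize (Hab (Datatypes.S n)). lra. }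
      pose proof (growing_ineq _ _ Hg Hl 0). simpl in H0. specialize (Hab 0%nat). lra.
    + exists (-1). exists (fun _ => 0), (fun k => if Nat.eq_dec k 0 then 1 else 0).
      split; [intros k; destruct Nat.eq_dec; lra|]. split.
      * intros x Hx. exists 0%nat. simpl. apply HE in Hx. lra.
      * intros e He. exists 0%nat. intros n _. rewrite partial_one.
        unfold Rdist. replace (1 - - -1) with 0 by ring. rewrite Rabs_R0. auto.
Qed.

Section Enum.
Context {T : Type} (P : T -> R) (I : nat -> Prop) (z : nat -> T).
Hypothesis hP : is_pmf P.
Hypothesis hz : dec_enum P I z.

Lemma P_nonneg x : 0 <= P x.
Proof. destruct hP as [h _]; auto. Qed.

Lemma delta_mono a b : (a <= b)%nat -> delta P z a <= delta P z b.
Proof.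
  intros H; induction H; [lra|]. simpl. pose proof (P_nonneg (z m)). lra.
Qed.

Lemma delta_sumn n : delta P z n = sumn (fun i => P (z i)) n.
Proof. induction n; simpl; auto. rewrite IHn; auto. Qed.

Lemma I_down k j : I k -> (j <= k)%nat -> I j.
Proof.
  destruct hz as [Hd _]. intros Hk Hj. induction Hj; auto.
Qed.

Lemma sum_list_map_z (l : list nat) : sum_list P (map z l) = sum_list (fun i => P (z i)) l.
Proof. induction l; simpl; auto. rewrite IHl; auto. Qed.

Lemma NoDup_map_seq a n : (forall i, (a <= i < a + n)%nat -> I i) -> NoDup (map z (seq a n)).
Proof.
  destruct hz as [_ [Hinj _]].
  revert a; induction n; intros a H; simpl; [constructor|].
  constructor.
  - intros Hi. apply in_map_iff in Hi. destruct Hi as [k [e Hk]].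
    apply in_seq in Hk. assert (k = a); [|lia].
    apply Hinj; auto; apply H; lia.
  - apply IHn. intros i Hi; apply H; lia.
Qed.

Lemma sum_seq_delta a n : sum_list P (map z (seq a n)) = delta P z (a + n) - delta P z a.
Proof.
  rewrite sum_list_map_z. pose proof (sum_list_seq (fun i => P (z i)) n a).
  rewrite !delta_sumn. lra.
Qed.

Lemma delta_le1 k : I k -> delta P z (S k) <= 1.
Proof.
  intros Hk. pose proof (sum_seq_delta 0 (S k)). rewrite Nat.add_0_l in H.
  change (delta P z 0) with 0 in H.
  assert (sum_list P (map z (seq 0 (S k))) <= 1).
  { apply pmf_bound; auto. apply NoDup_map_seq. intros i Hi. apply (I_down k); auto; lia. }
  lra.
Qed.

Lemma interval_unique k k' d : delta P z k <= d < delta P z (S k) ->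
  delta P z k' <= d < delta P z (S k') -> k = k'.
Proof.
  intros H1 H2. destruct (lt_eq_lt_dec k k') as [[h|h]|h]; auto.
  - pose proof (delta_mono (S k) k' h). lra.
  - pose proof (delta_mono (S k') k h). lra.
Qed.

Lemma nat_bound L : (forall k, In k L -> I k) ->
  exists N, (forall k, In k L -> (k < N)%nat) /\ (forall j, (j < N)%nat -> I j).
Proof.
  induction L as [|k L IH]; intros H.
  - exists 0%nat. split; [intros k []|intros; lia].
  - destruct IH as [N [H1 H2]]; [intros; apply H; right; auto|].
    exists (Nat.max N (S k)). split.
    + intros k' [e|i]; [subst; lia|]. specialize (H1 k' i); lia.
    + intros j Hj. destruct (Nat.lt_ge_cases j N); auto.
      apply (I_down k); [apply H; left; auto|lia].
Qed.

Lemma find_interval d N : delta P z 0 <= d < delta P z N ->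
  exists k, (k < N)%nat /\ delta P z k <= d < delta P z (S k).
Proof.
  induction N; intros H; [simpl in H; lra|].
  destruct (Rlt_dec d (delta P z N)) as [h|h].
  - destruct IHN as [k [Hk1 Hk2]]; [lra|]. exists k; split; auto.
  - exists N; split; [lia|lra].
Qed.

Lemma cover d : 0 <= d < 1 -> exists k, I k /\ delta P z k <= d < delta P z (S k).
Proof.
  intros Hd. destruct (pmf_approx P hP d) as [l [Hl Hs]]; [lra|].
  destruct hz as [_ [_ [Hpos [Hsurj _]]]].
  destruct (reindex P z I (fun i => P (z i)) l Hl) as [L [HL1 [HL2 HL3]]].
  { intros x Hx. destruct (Rle_dec (P x) 0) as [h|h]; [left; auto|right].
    destruct (Hsurj x) as [k [Hk e]]; [lra|]. exists k; repeat split; auto. subst; lra. }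
  destruct (nat_bound L) as [N [HN1 HN2]]; [intros k Hk; apply HL2; auto|].
  pose proof (sum_list_nat_bound (fun i => P (z i)) L N (fun k => P_nonneg (z k)) HL1 HN1).
  rewrite <- delta_sumn in H.
  destruct (find_interval d N) as [k [Hk1 Hk2]]; [simpl; lra|].
  exists k; split; auto.
Qed.

Lemma c_fun_unique d v v' : c_fun P I z d v -> c_fun P I z d v' -> v = v'.
Proof.
  intros [k [_ [Hk e]]] [k' [_ [Hk' e']]]. subst.
  rewrite (interval_unique k k' d Hk Hk'). auto.
Qed.

Lemma pos_P k : I k -> 0 < P (z k).
Proof. destruct hz as [_ [_ [Hpos _]]]; auto. Qed.

Lemma delta_S k : delta P z (S k) = delta P z k + P (z k).
Proof. reflexivity. Qed.

Lemma delta_nonneg k : 0 <= delta P z k.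
Proof. pose proof (delta_mono 0 k (Nat.le_0_l k)). simpl in H. auto. Qed.

Lemma I_lt1 k : I k -> 0 <= delta P z k < 1.
Proof.
  intros Hk. pose proof (delta_le1 k Hk). pose proof (pos_P k Hk).
  rewrite delta_S in H. pose proof (delta_nonneg k). lra.
Qed.

End Enum.

Definition pick_idx {T} (P : T -> R) (I : nat -> Prop) (z : nat -> T) (d : R) : nat :=
  match excluded_middle_informative (exists k, I k /\ delta P z k <= d < delta P z (S k)) with
  | left h => proj1_sig (constructive_indefinite_description _ h)
  | right _ => 0%nat
  end.

Lemma pick_spec {T} (P : T -> R) I z d :
  (exists k, I k /\ delta P z k <= d < delta P z (S k)) ->
  I (pick_idx P I z d) /\ delta P z (pick_idx P I z d) <= d < delta P z (S (pick_idx P I z d)).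
Proof.
  intros H. unfold pick_idx. destruct excluded_middle_informative as [h|h]; [|tauto].
  destruct constructive_indefinite_description as [k Hk]. simpl. auto.
Qed.

Lemma exp_le_mono x y : x <= y -> exp x <= exp y.
Proof. intros [h|h]; [left; apply exp_increasing; auto|subst; lra]. Qed.

Lemma le_eps a b : (forall eta, 0 < eta -> a <= b + eta) -> a <= b.
Proof. intros H. apply Rnot_lt_le; intros Hc. specialize (H ((a - b)/2)). lra. Qed.

Lemma sum_list_plus {T} (u v : T -> R) l :
  sum_list (fun x => u x + v x) l = sum_list u l + sum_list v l.
Proof. induction l; simpl; [ring|rewrite IHl; ring]. Qed.

Lemma sum_list_swap {A B} (g : A -> B -> R) l1 l2 :
  sum_list (fun a => sum_list (fun b => g a b) l2) l1 =
  sum_list (fun b => sum_list (fun a => g a b) l1) l2.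
Proof.
  induction l1 as [|a l1 IH]; simpl.
  - induction l2; simpl; auto. rewrite <- IHl2; ring.
  - rewrite IH. rewrite <- sum_list_plus. auto.
Qed.

Lemma sumn_ext w v n : (forall k, (k < n)%nat -> w k = v k) -> sumn w n = sumn v n.
Proof. intros H; apply Rle_antisym; apply sumn_le; intros k Hk; rewrite (H k Hk); lra. Qed.

Section Main.
Context {X Y : Type} (PX : X -> R) (PY : Y -> R) (hPX : is_pmf PX) (hPY : is_pmf PY)
  (IX : nat -> Prop) (zX : nat -> X) (hzX : dec_enum PX IX zX)
  (IY : nat -> Prop) (zY : nat -> Y) (hzY : dec_enum PY IY zY)
  (eps gamma : R) (heps : 0 < eps < 1) (hgamma : 0 < gamma)
  (hexp : exp (- gamma) <= eps).

Local Notation dx := (delta PX zX).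
Local Notation dy := (delta PY zY).
Local Notation EE := (E_set PX IX zX PY IY zY gamma).

Definition phi (x : X) : Y :=
  match excluded_middle_informative (exists k, IX k /\ zX k = x) with
  | left h => zY (pick_idx PY IY zY (dx (proj1_sig (constructive_indefinite_description _ h))))
  | right _ => zY 0%nat
  end.

Definition ff (y : Y) (x : X) : R :=
  if excluded_middle_informative (phi x = y) then PX x else 0.

Definition Q (y : Y) : R := pushforward PX phi y.

Lemma Q_eq y : Q y = tsum (ff y).
Proof. reflexivity. Qed.

Lemma phi_spec k j : IX k -> IY j -> dy j <= dx k < dy (S j) -> phi (zX k) = zY j.
Proof.
  intros Hk Hj Hd. unfold phi. destruct excluded_middle_informative as [h|h].
  - destruct constructive_indefinite_description as [k' [Hk' e]]. simpl.
    destruct hzX as [_ [Hinj _]]. assert (k' = k) by (apply Hinj; auto). subst k'.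
    destruct (pick_spec PY IY zY (dx k)) as [_ Hp]; [exists j; auto|].
    f_equal. apply (interval_unique PY zY hPY _ _ _ Hp Hd).
  - exfalso; apply h; eauto.
Qed.

Lemma ff_le y x : 0 <= ff y x <= PX x.
Proof.
  unfold ff. pose proof (P_nonneg PX hPX x). destruct excluded_middle_informative; lra.
Qed.

Lemma ff_bound y : forall l, NoDup l -> sum_list (ff y) l <= 1.
Proof.
  intros l Hl. pose proof (pmf_bound PX hPX l Hl).
  assert (sum_list (ff y) l <= sum_list PX l) by (apply sum_list_le; intros; apply ff_le). lra.
Qed.

Lemma Q_nonneg y : 0 <= Q y.
Proof. apply tsum_nonneg. Qed.

Lemma qlow j m : IY j -> dy j <= dx m < dy (S j) -> dy (S j) - dx m <= Q (zY j).
Proof.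
  intros Hj Hm.
  assert (Hu : forall u, dx m <= u < dy (S j) -> u - dx m <= Q (zY j)).
  { intros u Hu.
    pose proof (delta_le1 PY IY zY hPY hzY j Hj).
    pose proof (delta_nonneg PX zX hPX m).
    destruct (cover PX IX zX hPX hzX u) as [k0 [Hk0 Hk0']]; [lra|].
    assert (Hmk : (m <= k0)%nat).
    { destruct (Nat.le_gt_cases m k0) as [h|h]; auto.
      pose proof (delta_mono PX zX hPX (S k0) m h). lra. }
    set (l := map zX (seq m (S k0 - m))).
    assert (Hnd : NoDup l).
    { apply (NoDup_map_seq PX IX zX hzX). intros i Hi.
      apply (I_down PX IX zX hzX k0); auto; lia. }
    assert (Hs : sum_list (ff (zY j)) l = sum_list PX l).
    { apply sum_list_ext. intros x Hx. unfold l in Hx. apply in_map_iff in Hx.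
      destruct Hx as [i [e Hi]]. subst x. apply in_seq in Hi.
      unfold ff. destruct excluded_middle_informative as [h|h]; auto.
      exfalso. apply h. apply phi_spec; auto.
      - apply (I_down PX IX zX hzX k0); auto; lia.
      - pose proof (delta_mono PX zX hPX m i ltac:(lia)).
        pose proof (delta_mono PX zX hPX i k0 ltac:(lia)). lra. }
    pose proof (sum_seq_delta PX zX m (S k0 - m)).
    replace (m + (S k0 - m))%nat with (S k0) in H1 by lia.
    pose proof (tsum_ge (ff (zY j)) 1 l (ff_bound (zY j)) Hnd).
    rewrite Q_eq. fold l in H1. lra. }
  pose proof (Q_nonneg (zY j)).
  apply Rnot_lt_le. intros Hc.
  specialize (Hu ((Q (zY j) + dx m + dy (S j)) / 2)). lra.
Qed.

Definition wv (j : nat) : R :=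
  let s := dy j in let k := pick_idx PX IX zX s in
  if Rlt_dec (dx k) s then Rmin (dx (S k)) (dy (S j)) - s else 0.

Definition w (j : nat) : R := if excluded_middle_informative (IY j) then wv j else 0.

Lemma pick_x j : IY j -> let k := pick_idx PX IX zX (dy j) in
  IX k /\ dx k <= dy j < dx (S k).
Proof.
  intros Hj. apply pick_spec. apply (cover PX IX zX hPX hzX).
  apply (I_lt1 PY IY zY hPY hzY j Hj).
Qed.

Lemma w_bounds j : 0 <= w j /\ w j <= dy (S j) - dy j.
Proof.
  unfold w. destruct excluded_middle_informative as [Hj|Hj].
  - pose proof (pick_x j Hj) as [Hk1 Hk2]. unfold wv; cbv zeta.
    pose proof (pos_P PY IY zY hzY j Hj). pose proof (delta_S PY zY j).
    destruct Rlt_dec.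
    + pose proof (Rmin_l (dx (S (pick_idx PX IX zX (dy j)))) (dy (S j))).
      pose proof (Rmin_r (dx (S (pick_idx PX IX zX (dy j)))) (dy (S j))).
      pose proof (delta_S PY zY j); pose proof (delta_S PX zX (pick_idx PX IX zX (dy j))). unfold Rmin in *. destruct Rle_dec; lra.
    + lra.
  - pose proof (delta_mono PY zY hPY j (S j) (Nat.le_succ_diag_r j)). lra.
Qed.

Lemma qlow2 j : IY j -> PY (zY j) - w j <= Q (zY j).
Proof.
  intros Hj. pose proof (pick_x j Hj) as [Hk1 Hk2].
  pose proof (pos_P PY IY zY hzY j Hj).
  pose proof (Q_nonneg (zY j)).
  unfold w. destruct excluded_middle_informative as [_|h]; [|tauto].
  unfold wv; cbv zeta. set (k := pick_idx PX IX zX (dy j)) in *.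
  destruct Rlt_dec as [h|h].
  - destruct (Rlt_dec (dx (S k)) (dy (S j))) as [h2|h2].
    + pose proof (qlow j (S k) Hj ltac:(lra)).
      rewrite Rmin_left by lra. pose proof (delta_S PY zY j). lra.
    + rewrite Rmin_right by lra. pose proof (delta_S PY zY j). lra.
  - assert (dx k = dy j) by lra.
    pose proof (qlow j k Hj). pose proof (delta_S PY zY j); pose proof (delta_S PX zX (pick_idx PX IX zX (dy j))). lra.
Qed.

Lemma w_nonE j : IY j -> ~ EE (dy j) -> w j <= eps * PY (zY j).
Proof.
  intros Hj HE. pose proof (pick_x j Hj) as [Hk1 Hk2].
  pose proof (pos_P PY IY zY hzY j Hj).
  unfold w. destruct excluded_middle_informative as [_|h]; [|tauto].
  unfold wv; cbv zeta. set (k := pick_idx PX IX zX (dy j)) in *.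
  destruct Rlt_dec as [h|h]; [|apply Rmult_le_pos; lra].
  pose proof (pos_P PX IX zX hzX k Hk1).
  assert (Hg : gamma <= ln (/ PX (zX k)) - ln (/ PY (zY j))).
  { apply Rnot_lt_le. intros Hc. apply HE. split.
    - apply (I_lt1 PY IY zY hPY hzY j Hj).
    - exists (ln (/ PX (zX k))), (ln (/ PY (zY j))). split; [|split]; auto.
      + exists k; split; auto.
      + exists j; split; auto. split; auto. pose proof (delta_S PY zY j). lra. }
  rewrite !ln_Rinv in Hg by lra.
  assert (PX (zX k) <= PY (zY j) * exp (- gamma)).
  { rewrite <- (exp_ln (PX (zX k))) by lra. rewrite <- (exp_ln (PY (zY j))) by lra.
    rewrite <- exp_plus. apply exp_le_mono. lra. }
  assert (PY (zY j) * exp (- gamma) <= PY (zY j) * eps) by (apply Rmult_le_compat_l; lra).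
  pose proof (Rmin_l (dx (S k)) (dy (S j))). pose proof (delta_S PX zX k). rewrite (Rmult_comm eps). lra.
Qed.

Definition v (j : nat) : R := if excluded_middle_informative (EE (dy j)) then w j else 0.

Lemma v_bounds j : 0 <= v j <= w j.
Proof. pose proof (w_bounds j). unfold v; destruct excluded_middle_informative; lra. Qed.

Lemma v_E j y : IY j -> 0 < v j -> dy j <= y < dy j + v j -> EE y.
Proof.
  intros Hj Hv Hy. unfold v in *. destruct excluded_middle_informative as [HE|HE]; [|lra].
  pose proof (pick_x j Hj) as [Hk1 Hk2].
  unfold w in *. destruct excluded_middle_informative as [_|h]; [|tauto].
  unfold wv in *; cbv zeta in *. set (k := pick_idx PX IX zX (dy j)) in *.
  destruct Rlt_dec as [h|h]; [|lra].
  pose proof (Rmin_l (dx (S k)) (dy (S j))). pose proof (Rmin_r (dx (S k)) (dy (S j))).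
  pose proof (delta_le1 PY IY zY hPY hzY j Hj).
  pose proof (delta_nonneg PY zY hPY j).
  destruct HE as [_ [vx [vy [Hx [Hy' Hlt]]]]].
  assert (ex : vx = ln (/ PX (zX k))).
  { eapply (c_fun_unique PX IX zX hPX). exact Hx. exists k; split; auto. }
  assert (ey : vy = ln (/ PY (zY j))).
  { eapply (c_fun_unique PY IY zY hPY). exact Hy'. exists j; split; auto. split; [lra|].
    pose proof (delta_S PY zY j). pose proof (pos_P PY IY zY hzY j Hj). lra. }
  subst vx vy. split; [lra|].
  exists (ln (/ PX (zX k))), (ln (/ PY (zY j))). split; [|split]; auto.
  - exists k; split; auto. lra.
  - exists j; split; auto. lra.
Qed.

Lemma w_sum N : (forall j, (j < N)%nat -> IY j) -> sumn w N <= eps + lebesgue EE.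
Proof.
  intros HN.
  assert (H1 : sumn w N <= sumn (fun j => eps * PY (zY j) + v j) N).
  { apply sumn_le. intros k Hk. specialize (HN k Hk).
    unfold v. destruct excluded_middle_informative as [h|h].
    - pose proof (pos_P PY IY zY hzY k HN). assert (0 <= eps * PY (zY k)) by (apply Rmult_le_pos; lra). lra.
    - pose proof (w_nonE k HN h). lra. }
  rewrite sumn_lin in H1. rewrite <- (delta_sumn PY zY) in H1.
  assert (Hd : dy N <= 1).
  { destruct N; [simpl; lra|]. apply (delta_le1 PY IY zY hPY hzY). apply HN; lia. }
  assert (Hv : sumn v N <= lebesgue EE).
  { apply leb_ge.
    - intros x [Hx _]; auto.
    - intros a b Hab Hc eta Heta.
      assert (M1 : forall i, (i < N)%nat -> dy i <= dy i + v i).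
      { intros i _. pose proof (v_bounds i). lra. }
      assert (M2 : forall i i', (i < i')%nat -> (i' < N)%nat -> dy i + v i <= dy i').
      { intros i i' Hii' _. pose proof (v_bounds i). pose proof (w_bounds i).
        pose proof (delta_mono PY zY hPY (S i) i' Hii'). lra. }
      assert (M3 : forall i y, (i < N)%nat -> dy i <= y < dy i + v i -> exists k, a k <= y < b k).
      { intros i y Hi Hy. apply Hc. apply (v_E i); auto. lra. }
      destruct (multi (fun j => dy j) (fun j => dy j + v j) N a b Hab M1 M2 M3 eta Heta)
        as [n Hn].
      exists n. rewrite (sumn_ext v (fun i => dy i + v i - dy i)); auto.
      intros; ring. }
  assert (eps * dy N <= eps * 1) by (apply Rmult_le_compat_l; lra).
  lra.
Qed.

Lemma ff_inner x L : NoDup L -> sum_list (fun y => ff y x) L <= PX x.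
Proof.
  induction L as [|y L IH]; intros Hnd; simpl.
  - apply (P_nonneg PX hPX).
  - inversion Hnd; subst. unfold ff at 1. destruct excluded_middle_informative as [e|e].
    + assert (sum_list (fun y0 => ff y0 x) L = 0).
      { rewrite (sum_list_ext _ (fun _ => 0)).
        - clear. induction L; simpl; auto. rewrite IHL; ring.
        - intros y' Hy'. unfold ff. destruct excluded_middle_informative; auto.
          subst. congruence. }
      lra.
    + specialize (IH H2). lra.
Qed.

Lemma Q_sum_aux L : forall eta, 0 < eta -> exists l, NoDup l /\
  sum_list Q L <= sum_list (fun y => sum_list (ff y) l) L + eta.
Proof.
  induction L as [|y L IH]; intros eta Heta.
  - exists []. split; [constructor|simpl; lra].
  - destruct (IH (eta / 2)) as [l1 [Hl1 H1]]; [lra|].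
    destruct (tsum_approx (ff y) 1 (ff_bound y) (eta / 2)) as [l2 [Hl2 H2]]; [lra|].
    set (l := nodup cdec (l1 ++ l2)).
    assert (Hl : NoDup l) by apply NoDup_nodup.
    exists l. split; auto.
    assert (Hff : forall y0 x, 0 <= ff y0 x) by (intros; apply ff_le).
    assert (sum_list (ff y) l2 <= sum_list (ff y) l).
    { apply sum_list_incl; auto. intros x Hx. apply nodup_In. apply in_or_app; auto. }
    assert (sum_list (fun y0 => sum_list (ff y0) l1) L <= sum_list (fun y0 => sum_list (ff y0) l) L).
    { apply sum_list_le. intros y0 _. apply sum_list_incl; auto.
      intros x Hx. apply nodup_In. apply in_or_app; auto. }
    simpl. rewrite Q_eq. lra.
Qed.

Lemma Q_sum L : NoDup L -> sum_list Q L <= 1.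
Proof.
  intros HL. apply le_eps. intros eta Heta.
  destruct (Q_sum_aux L eta Heta) as [l [Hl H]].
  rewrite (sum_list_swap (fun y x => ff y x)) in H.
  assert (sum_list (fun x => sum_list (fun y => ff y x) L) l <= sum_list PX l).
  { apply sum_list_le. intros x _. apply ff_inner; auto. }
  pose proof (pmf_bound PX hPX l Hl). lra.
Qed.

Lemma main_bound : var_dist PY (pushforward PX phi) <= 2 * eps + 2 * lebesgue EE.
Proof.
  assert (Hmu : 0 <= lebesgue EE).
  { apply leb_ge. intros x [Hx _]; auto.
    intros a b Hab _ eta Heta. exists 0%nat. simpl. specialize (Hab 0%nat). lra. }
  unfold var_dist. apply tsum_le; [|lra].
  intros l Hl. apply le_eps. intros eta Heta.
  destruct (pmf_approx PY hPY (1 - eta)) as [l2 [Hl2 H2]]; [lra|].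
  set (l' := nodup cdec (l ++ l2)).
  assert (Hl' : NoDup l') by apply NoDup_nodup.
  change (sum_list (fun a => Rabs (PY a - Q a)) l <= 2 * eps + 2 * lebesgue EE + eta).
  assert (A1 : sum_list (fun a => Rabs (PY a - Q a)) l <= sum_list (fun a => Rabs (PY a - Q a)) l').
  { apply sum_list_incl; auto. intros; apply Rabs_pos.
    intros x Hx. apply nodup_In. apply in_or_app; auto. }
  assert (A2 : sum_list PY l2 <= sum_list PY l').
  { apply sum_list_incl; auto. apply (P_nonneg PY hPY).
    intros x Hx. apply nodup_In. apply in_or_app; auto. }
  set (h := fun y => Rmax (PY y - Q y) 0).
  assert (A3 : sum_list (fun a => Rabs (PY a - Q a)) l' =
     2 * sum_list h l' - sum_list PY l' + sum_list Q l').
  { rewrite <- sum_list_lin. apply sum_list_ext. intros x _. unfold h, Rmax, Rabs.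
    repeat destruct Rcase_abs; repeat destruct Rle_dec; lra. }
  pose proof (Q_sum l' Hl') as A4.
  destruct (reindex h zY IY w l' Hl') as [L [HL1 [HL2 HL3]]].
  { intros y Hy. destruct (Rle_dec (PY y) 0) as [e|e].
    - left. unfold h. pose proof (Q_nonneg y). unfold Rmax. destruct Rle_dec; lra.
    - right. destruct hzY as [_ [_ [_ [Hs _]]]]. destruct (Hs y) as [j [Hj ej]]; [lra|].
      exists j; split; auto. split; auto. subst y.
      pose proof (qlow2 j Hj). pose proof (w_bounds j). unfold h, Rmax.
      destruct Rle_dec; lra. }
  destruct (nat_bound PY IY zY hzY L) as [N [HN1 HN2]]; [intros k Hk; apply HL2; auto|].
  pose proof (sum_list_nat_bound w L N (fun k => proj1 (w_bounds k)) HL1 HN1).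
  pose proof (w_sum N HN2).
  lra.
Qed.

End Main.

Theorem proposition1 (X Y : Type) (HX : countable X) (HY : countable Y)
  (PX : X -> R) (PY : Y -> R) (hPX : is_pmf PX) (hPY : is_pmf PY)
  (IX : nat -> Prop) (zX : nat -> X) (hzX : dec_enum PX IX zX)
  (IY : nat -> Prop) (zY : nat -> Y) (hzY : dec_enum PY IY zY)
  (eps gamma : R) (heps : 0 < eps < 1) (hgamma : 0 < gamma)
  (hexp : exp (- gamma) <= eps) :
  exists phi : X -> Y,
    var_dist PY (pushforward PX phi)
      <= 9 * eps + 10 * lebesgue (E_set PX IX zX PY IY zY gamma).
Proof.
  exists (phi PX PY IX zX IY zY).
  pose proof (main_bound PX PY hPX hPY IX zX hzX IY zY hzY eps gamma heps hexp).
  assert (0 <= lebesgue (E_set PX IX zX PY IY zY gamma)).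
  { apply leb_ge. intros x [Hx _]; auto.
    intros a b Hab _ eta Heta. exists 0%nat. simpl. specialize (Hab 0%nat). lra. }
  lra.
Qed.
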